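(* Let $(\mathcal{E},\mathcal{L},\mathcal{B})$ be a weakly left resolving labelled space with associated inverse semigroup $S$, let $\alpha\in\mathcal{L}^\infty$ and let $\{\mathcal{F}_n\}_{n\ge0}$ be an admissible family for $\alpha$. Then \[\xi=\bigcup_{n=0}^\infty\bigcup_{A\in\mathcal{F}_n}\uparrow(\alpha_{1,n},A,\alpha_{1,n})\] is a filter in $E(S)$.
   Context: A directed graph $\mathcal{E}=(\mathcal{E}^0,\mathcal{E}^1,r,s)$ has countable nonempty vertex set, edge set, range/source maps; paths satisfy $r(\lambda_i)=s(\lambda_{i+1})$. A labelled graph has a surjective labelling $\mathcal{L}:\mathcal{E}^1\to\mathcal{A}$ extended letterwise to finite and infinite paths. $\omega$ is the empty word, $\mathcal{L}^+=\bigcup_{n\ge1}\mathcal{L}(\mathcal{E}^n)$, $\mathcal{L}^*=\{\omega\}\cup\mathcal{L}^+$, $\mathcal{L}^\infty$ the labels of infinite paths; $\alpha_{i,j}=\alpha_i\cdots\alpha_j$, $\alpha_{1,0}=\omega$. For $A\subseteq\mathcal{E}^0$, $\alpha\in\mathcal{L}^+$: $r(A,\alpha)=\{r(\lambda):\mathcal{L}(\lambda)=\alpha,\ s(\lambda)\in A\}$, $r(A,\omega)=A$, $r(\alpha)=r(\mathcal{E}^0,\alpha)$. $\mathcal{B}$ accommodating: closed under $r(\cdot,\alpha)$, finite intersections and unions, contains $r(\alpha)$ for $\alpha\in\mathcal{L}^+$; labelled space $(\mathcal{E},\mathcal{L},\mathcal{B})$ weakly left resolving if $r(A\cap B,\alpha)=r(A,\alpha)\cap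 r(B,\alpha)$ for $A,B\in\mathcal{B}$, $\alpha\in\mathcal{L}^+$. $\mathcal{B}_\alpha=\mathcal{B}\cap\mathcal{P}(r(\alpha))$. $S$ = triples $(\alpha,A,\beta)$, $\alpha,\beta\in\mathcal{L}^*$, $\emptyset\ne A\in\mathcal{B}_\alpha\cap\mathcal{B}_\beta$, plus $0$; product $(\alpha,A,\beta)(\gamma,B,\delta)=(\alpha\gamma',r(A,\gamma')\cap B,\delta)$ if $\gamma=\beta\gamma'$, $=(\alpha,A\cap r(B,\beta'),\delta\beta')$ if $\beta=\gamma\beta'$, $=0$ otherwise (empty middle entry identified with $0$). $E(S)=\{(\alpha,A,\alpha)\}\cup\{0\}$, $p\le q$ iff $pq=p$; $(\alpha,A,\alpha)\le(\beta,B,\beta)$ iff $\alpha=\beta\alpha'$ and $A\subseteq r(B,\alpha')$; $\uparrow x=\{y:x\le y\}$. A filter in a poset with least element $0$ is a nonempty upward-closed subset not containing $0$ in which any two elements have a common lower bound in it. A family $\{\mathcal{F}_n\}_{n\ge0}$ with $\mathcal{F}_n$ a filter in $\mathcal{B}_{\alpha_{1,n}}$ for $n>0$ and $\mathcal{F}_0$ a filter in $\mathcal{B}$ or empty is admissible for $\alpha$ if $\mathcal{F}_n\subseteq\{A\in\mathcal{B}_{\alpha_{1,n}}:r(A,\alpha_{n+1})\in\mathcal{F}_{n+1}\}$ for all $n\ge0$. *)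

(* Defs.v *)
From Stdlib Require Import List Arith.
Import ListNotations.
Set Implicit Arguments.

Section LS.
Variables (V Ed Alph : Type) (src rng : Ed -> V) (lab : Ed -> Alph).

Definition vset := V -> Prop.

(* countable (possibly empty) type *)
Definition countable (T : Type) : Prop :=
  exists f : nat -> option T, forall x, exists n, f n = Some x.

Definition labelled_graph : Prop :=
  countable V /\ (exists v : V, True) /\ countable Ed /\
  (forall a : Alph, exists e, lab e = a).

Fixpoint consec (l : list Ed) : Prop :=
  match l with
  | e1 :: ((e2 :: _) as t) => rng e1 = src e2 /\ consec t
  | _ => True
  end.

Definition Lplus (w : list Alph) : Prop :=
  exists e l, consec (e :: l) /\ map lab (e :: l) = w.
Definition Lstar (w : list Alph) : Prop := w = [] \/ Lplus w.

Definition Linf (alpha : nat -> Alph) : Prop :=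
  exists p : nat -> Ed, (forall i, rng (p i) = src (p (S i))) /\
                        (forall i, lab (p i) = alpha i).

Definition rset (A : vset) (w : list Alph) : vset :=
  fun v => match w with
  | [] => A v
  | _ => exists e l, consec (e :: l) /\ map lab (e :: l) = w /\
                     A (src e) /\ v = rng (last (e :: l) e)
  end.

Definition rword (w : list Alph) : vset := rset (fun _ => True) w.

Definition inter (A B : vset) : vset := fun v => A v /\ B v.
Definition union (A B : vset) : vset := fun v => A v \/ B v.
Definition subset (A B : vset) : Prop := forall v, A v -> B v.
Definition seteq (A B : vset) : Prop := forall v, A v <-> B v.

Variable BB : vset -> Prop.

Definition accommodating : Prop :=
  (forall A w, BB A -> Lplus w -> BB (rset A w)) /\
  (forall A B, BB A -> BB B -> BB (inter A B)) /\
  (forall A B, BB A -> BB B -> BB (union A B)) /\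
  (forall w, Lplus w -> BB (rword w)).

Definition weakly_left_resolving : Prop :=
  forall A B w, BB A -> BB B -> Lplus w ->
    seteq (rset (inter A B) w) (inter (rset A w) (rset B w)).

Definition Bsub (w : list Alph) (A : vset) : Prop := BB A /\ subset A (rword w).

(* The inverse semigroup S: None = 0, Some (a, A, b) = (a, A, b). *)
Definition Selt := option (list Alph * vset * list Alph).

Definition inS (p : Selt) : Prop :=
  match p with
  | None => True
  | Some (a, A, b) => Lstar a /\ Lstar b /\ (exists v, A v) /\ Bsub a A /\ Bsub b A
  end.

(* (a, X, d) with empty middle entry identified with 0 *)
Definition mk (a : list Alph) (X : vset) (d : list Alph) (r : Selt) : Prop :=
  ((forall v, ~ X v) /\ r = None) \/ ((exists v, X v) /\ r = Some (a, X, d)).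

(* the product, as a relation: mulS p q r  <->  p q = r *)
Definition mulS (p q r : Selt) : Prop :=
  match p, q with
  | Some (a, A, b), Some (c, B, d) =>
      (exists c', c = b ++ c' /\ mk (a ++ c') (inter (rset A c') B) d r)
   \/ (exists b', b = c ++ b' /\ mk a (inter A (rset B b')) (d ++ b') r)
   \/ ((forall c', c <> b ++ c') /\ (forall b', b <> c ++ b') /\ r = None)
  | _, _ => r = None
  end.

Definition inES (p : Selt) : Prop :=
  inS p /\ match p with None => True | Some (a, _, b) => a = b end.
Definition leS (p q : Selt) : Prop := mulS p q p.

Definition upset (x y : Selt) : Prop := inES y /\ leS x y.

Definition filterES (xi : Selt -> Prop) : Prop :=
  (exists x, xi x) /\
  (forall x, xi x -> inES x) /\
  (forall x y, xi x -> inES y -> leS x y -> xi y) /\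
  ~ xi None /\
  (forall x y, xi x -> xi y -> exists z, xi z /\ leS z x /\ leS z y).

Definition filterB (w : list Alph) (F : vset -> Prop) : Prop :=
  (exists X, F X) /\
  (forall X, F X -> Bsub w X) /\
  (forall X Y, F X -> Bsub w Y -> subset X Y -> F Y) /\
  (forall X, F X -> exists v, X v) /\
  (forall X Y, F X -> F Y -> exists Z, F Z /\ subset Z X /\ subset Z Y).

(* alpha_{1,n}, with alpha indexed from 0: alpha_{i+1} = alpha i *)
Definition pre (alpha : nat -> Alph) (n : nat) : list Alph := map alpha (seq 0 n).

Definition admissible (alpha : nat -> Alph) (F : nat -> vset -> Prop) : Prop :=
  ((forall X, ~ F 0 X) \/ filterB [] (F 0)) /\
  (forall n, 0 < n -> filterB (pre alpha n) (F n)) /\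
  (forall n X, F n X -> Bsub (pre alpha n) X /\ F (S n) (rset X [alpha n])).

Definition xi_of (alpha : nat -> Alph) (F : nat -> vset -> Prop) (y : Selt) : Prop :=
  exists n X, F n X /\ upset (Some (pre alpha n, X, pre alpha n)) y.

End LS.

(* Main.v *)
Require Import Defs.
From Stdlib Require Import List Arith Lia FunctionalExtensionality PropExtensionality.
Import ListNotations.

Lemma last_def {A : Type} (x : A) l d d' : last (x :: l) d = last (x :: l) d'.
Proof. revert x; induction l as [|y l IH]; intros x; simpl; auto.
  specialize (IH y). simpl in IH. destruct l; auto. Qed.

Lemma last_app2 {A : Type} (l1 l2 : list A) (x d : A) :
  last (l1 ++ x :: l2) d = last (x :: l2) x.
Proof. induction l1 as [|y l1 IH]; simpl.
  - apply last_def.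
  - rewrite IH. destruct l1; simpl; auto; destruct l2; auto. Qed.

Lemma consec_app {V Ed : Type} (src rng : Ed -> V) a l1 b l2 d :
  consec src rng (a :: l1) -> consec src rng (b :: l2) ->
  rng (last (a :: l1) d) = src b -> consec src rng (a :: l1 ++ b :: l2).
Proof.
  revert a; induction l1 as [|c l1 IH]; intros a H1 H2 H3; simpl in *.
  - split; auto.
  - destruct H1 as [H1a H1b]. split; auto. apply IH; auto.
Qed.

Lemma rset_comp {V Ed Alph : Type} (src rng : Ed -> V) (lab : Ed -> Alph) C u w :
  subset (rset src rng lab (rset src rng lab C u) w) (rset src rng lab C (u ++ w)).
Proof.
  intros v Hv. destruct u as [|x u]; [exact Hv|].
  destruct w as [|y w]; [rewrite app_nil_r; exact Hv|].
  destruct Hv as (e2 & l2 & Hc2 & Hm2 & Hs2 & Hv).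
  destruct Hs2 as (e1 & l1 & Hc1 & Hm1 & Hs1 & Hv1).
  exists e1, (l1 ++ e2 :: l2). split; [|split; [|split]].
  - apply consec_app with (d := e1); auto.
  - simpl. rewrite map_app. simpl in Hm1, Hm2. inversion Hm1. subst. simpl. rewrite Hm2. reflexivity.
  - exact Hs1.
  - rewrite Hv. change (e1 :: l1 ++ e2 :: l2) with ((e1 :: l1) ++ e2 :: l2).
    rewrite last_app2. reflexivity.
Qed.

Lemma rset_mono {V Ed Alph : Type} (src rng : Ed -> V) (lab : Ed -> Alph) A B w :
  subset A B -> subset (rset src rng lab A w) (rset src rng lab B w).
Proof.
  intros H v Hv. destruct w; [apply H; exact Hv|].
  destruct Hv as (e & l & H1 & H2 & H3 & H4). exists e, l. repeat split; auto.
Qed.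

Lemma leS_iff {V Ed Alph : Type} (src rng : Ed -> V) (lab : Ed -> Alph) a A b B :
  (exists v, A v) ->
  (leS src rng lab (Some (a, A, a)) (Some (b, B, b)) <->
   exists b', a = b ++ b' /\ subset A (rset src rng lab B b')).
Proof.
  intros HA. unfold leS, mulS. split.
  - intros [H|[H|H]].
    + destruct H as (c' & Hc & Hmk). destruct Hmk as [[_ Hn]|[_ Hs]]; [discriminate|].
      injection Hs as H1 H2 H3.
      assert (c' = []).
      { assert (length (a ++ c') = length a) as HL by (rewrite <- H1; auto).
        rewrite length_app in HL. destruct c'; simpl in *; auto; lia. }
      subst c'. exists []. rewrite app_nil_r. split; auto.
      intros v Hv. rewrite H2 in Hv. destruct Hv as [_ Hv]. exact Hv.
    + destruct H as (b' & Hb & Hmk). destruct Hmk as [[_ Hn]|[_ Hs]]; [discriminate|].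
      injection Hs as H2 H3. exists b'. split; auto.
      intros v Hv. rewrite H2 in Hv. destruct Hv as [_ Hv]. exact Hv.
    + destruct H as (_ & _ & H). discriminate.
  - intros (b' & Hb & Hs). right. left. exists b'. split; auto.
    right. assert (E : inter A (rset src rng lab B b') = A).
    { apply functional_extensionality; intro v. apply propositional_extensionality.
      unfold inter; split; [tauto|]. intro; split; auto. }
    rewrite E. split; auto. rewrite <- Hb. reflexivity.
Qed.

Lemma leS_trans {V Ed Alph : Type} (src rng : Ed -> V) (lab : Ed -> Alph) a A b B c C :
  (exists v, A v) -> (exists v, B v) ->
  leS src rng lab (Some (a, A, a)) (Some (b, B, b)) ->
  leS src rng lab (Some (b, B, b)) (Some (c, C, c)) ->
  leS src rng lab (Some (a, A, a)) (Some (c, C, c)).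
Proof.
  intros HA HB H1 H2. apply leS_iff in H1; auto. apply leS_iff in H2; auto.
  apply leS_iff; auto.
  destruct H1 as (b' & -> & H1). destruct H2 as (c' & -> & H2).
  exists (c' ++ b'). split; [rewrite app_assoc; auto|].
  intros v Hv. apply rset_comp. eapply rset_mono; [exact H2|]. apply H1. exact Hv.
Qed.

Lemma consec_seq {V Ed : Type} (src rng : Ed -> V) (p : nat -> Ed) :
  (forall i, rng (p i) = src (p (S i))) ->
  forall n k, consec src rng (p k :: map p (seq (S k) n)).
Proof.
  intros Hp n. induction n as [|n IH]; intros k; simpl; auto.
  split; auto. apply IH.
Qed.

Theorem mainTheorem6 (V Ed Alph : Type) (src rng : Ed -> V) (lab : Ed -> Alph)
  (BB : (V -> Prop) -> Prop)
  (Hgraph : labelled_graph V lab)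
  (Hacc : accommodating src rng lab BB)
  (Hwlr : weakly_left_resolving src rng lab BB)
  (alpha : nat -> Alph) (Halpha : Linf src rng lab alpha)
  (F : nat -> (V -> Prop) -> Prop)
  (Hadm : admissible src rng lab BB alpha F) :
  filterES src rng lab BB (xi_of src rng lab BB alpha F).
Proof.
  destruct Hadm as (H0 & Hpos & Hstep).
  assert (Hfil : forall n X, F n X -> filterB src rng lab BB (pre alpha n) (F n)).
  { intros [|n] X HX.
    - destruct H0 as [H0|H0]; [exfalso; eapply H0; eauto|exact H0].
    - apply Hpos; lia. }
  assert (Hne : forall n X, F n X -> exists v, X v).
  { intros n X HX. destruct (Hfil n X HX) as (_ & _ & _ & H & _). auto. }
  assert (Hlstar : forall n, Lstar src rng lab (pre alpha n)).
  { intros [|n]; [left; reflexivity|]. right.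
    destruct Halpha as (p & Hp1 & Hp2).
    exists (p 0), (map p (seq 1 n)). split; [apply consec_seq; auto|].
    unfold pre. simpl. rewrite Hp2, map_map. f_equal. apply map_ext. auto. }
  assert (Hbase : forall n X, F n X -> inES src rng lab BB (Some (pre alpha n, X, pre alpha n))).
  { intros n X HX. split; [|reflexivity]. simpl.
    destruct (Hstep n X HX) as [HB _]. refine (conj (Hlstar n) (conj (Hlstar n) (conj (Hne n X HX) (conj HB HB)))). }
  assert (Hrefl : forall n X, F n X -> leS src rng lab (Some (pre alpha n, X, pre alpha n))
                                          (Some (pre alpha n, X, pre alpha n))).
  { intros n X HX. apply leS_iff; eauto. exists []. rewrite app_nil_r. split; auto.
    intros v Hv; exact Hv. }
  assert (Hpush : forall k n X, F n X -> exists Y, F (k + n) Y /\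
              subset Y (rset src rng lab X (map alpha (seq n k)))).
  { induction k as [|k IH]; intros n X HX.
    - exists X. split; auto. intros v Hv; exact Hv.
    - destruct (IH n X HX) as (Y & HY & HYs).
      exists (rset src rng lab Y [alpha (k + n)]). split.
      + apply (Hstep (k + n) Y HY).
      + rewrite seq_S, map_app. replace (n + k) with (k + n) by lia.
        intros v Hv. apply rset_comp. eapply rset_mono; [exact HYs|]. exact Hv. }
  assert (Hpre : forall n k, pre alpha (k + n) = pre alpha n ++ map alpha (seq n k)).
  { intros n k. unfold pre. rewrite Nat.add_comm, seq_app, map_app. reflexivity. }
  assert (Hlow : forall n X m Y, n <= m -> F n X -> F m Y ->
     exists Z, F m Z /\ leS src rng lab (Some (pre alpha m, Z, pre alpha m)) (Some (pre alpha n, X, pre alpha n))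
                 /\ leS src rng lab (Some (pre alpha m, Z, pre alpha m)) (Some (pre alpha m, Y, pre alpha m))).
  { intros n X m Y Hnm HX HY.
    destruct (Hpush (m - n) n X HX) as (Y' & HY' & HY's).
    replace (m - n + n) with m in HY' by lia.
    destruct (Hfil m Y HY) as (_ & _ & _ & _ & Hmeet).
    destruct (Hmeet Y' Y HY' HY) as (Z & HZ & HZ1 & HZ2).
    exists Z. split; [auto|split].
    - apply leS_iff; eauto. exists (map alpha (seq n (m - n))). split.
      + rewrite <- Hpre. f_equal. lia.
      + intros v Hv. apply HY's, HZ1, Hv.
    - apply leS_iff; eauto. exists []. rewrite app_nil_r. split; auto. }
  assert (Hxi : forall x, xi_of src rng lab BB alpha F x ->
     exists n X b B, F n X /\ x = Some (b, B, b) /\ (exists v, B v) /\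
       leS src rng lab (Some (pre alpha n, X, pre alpha n)) (Some (b, B, b))).
  { intros x (n & X & HX & Hin & Hle). destruct x as [[[a B] b]|].
    - destruct Hin as [Hin Heq]. simpl in Heq. subst b. simpl in Hin.
      exists n, X, a, B. repeat split; auto. tauto.
    - unfold leS, mulS in Hle. discriminate. }
  split; [|split; [|split; [|split]]].
  - destruct (Hpos 1 ltac:(lia)) as ((X & HX) & _).
    exists (Some (pre alpha 1, X, pre alpha 1)). exists 1, X. split; auto. split; auto.
  - intros x (n & X & _ & Hin & _). exact Hin.
  - intros x y Hx Hy Hxy.
    destruct (Hxi x Hx) as (n & X & b & B & HX & -> & HBne & Hle).
    exists n, X. split; auto. split; auto.
    destruct y as [[[c C] d]|].
    + destruct Hy as [Hy Heq]. simpl in Heq. subst d.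
      eapply leS_trans; eauto.
    + unfold leS, mulS in Hxy. discriminate.
  - intros Hx. destruct (Hxi None Hx) as (n & X & b & B & _ & H & _). discriminate.
  - intros x y Hx Hy.
    destruct (Hxi x Hx) as (n & X & b & B & HX & -> & HBne & Hle1).
    destruct (Hxi y Hy) as (m & Y & c & C & HY & -> & HCne & Hle2).
    destruct (le_ge_dec n m) as [Hnm|Hnm].
    + destruct (Hlow n X m Y Hnm HX HY) as (Z & HZ & HZ1 & HZ2).
      exists (Some (pre alpha m, Z, pre alpha m)). split; [|split].
      * exists m, Z. split; auto. split; auto.
      * eapply leS_trans; [| |exact HZ1|exact Hle1]; eauto.
      * eapply leS_trans; [| |exact HZ2|exact Hle2]; eauto.
    + destruct (Hlow m Y n X Hnm HY HX) as (Z & HZ & HZ1 & HZ2).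
      exists (Some (pre alpha n, Z, pre alpha n)). split; [|split].
      * exists n, Z. split; auto. split; auto.
      * eapply leS_trans; [| |exact HZ2|exact Hle1]; eauto.
      * eapply leS_trans; [| |exact HZ1|exact Hle2]; eauto.
Qed.
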